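(* Let $k>0$ and let $U:(0,1)\to(0,\infty)$ be any function with $U(c)\ge\sigma(c)$ for all $c\in(0,1)$. Then for all $c\in(0,1)$, $$\frac{2k}{U(1-c)}\le L_2(c)\le\sigma(c).$$ In particular, with $U=U_1$, where $U_1(c)=-2\Phi^{-1}\!\left(\frac{1-c}{1+e^k}\right)$, this gives $-k\big/\Phi^{-1}\!\left(\frac{c}{1+e^k}\right)\le L_2(c)$.
   Context: Let $\Phi$ denote the standard normal distribution function. For $\sigma>0$ put $d_1(\sigma)=-k/\sigma+\sigma/2$, $d_2(\sigma)=-k/\sigma-\sigma/2$, and $C_{\mathrm{BS}}(\sigma)=\Phi(d_1(\sigma))-e^k\,\Phi(d_2(\sigma))$, a strictly increasing bijection from $(0,\infty)$ onto $(0,1)$; for $c\in(0,1)$ the implied volatility $\sigma(c)$ is the unique $\sigma>0$ with $C_{\mathrm{BS}}(\sigma)=c$. The function $d_1^{-1}(x)=x+\sqrt{x^2+2k}$ is the inverse of $d_1$, and $L_2(c)=d_1^{-1}(\Phi^{-1}(c))$. The function $U_1$ is known to satisfy $U_1(c)\ge\sigma(c)$. *)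

(* Defs.v *)
From Stdlib Require Import Reals Lra ClassicalEpsilon.
From Coquelicot Require Import Coquelicot.
Open Scope R_scope.

Definition Phi (x : R) : R :=
  / sqrt (2 * PI) *
  RInt_gen (fun t => exp (- (t * t) / 2)) (Rbar_locally m_infty) (at_point x).

Definition Phi_inv (c : R) : R :=
  epsilon (inhabits 0) (fun x => Phi x = c).

Definition d1 (k s : R) : R := - k / s + s / 2.
Definition d2 (k s : R) : R := - k / s - s / 2.

Definition C_BS (k s : R) : R := Phi (d1 k s) - exp k * Phi (d2 k s).

Definition implied_vol (k c : R) : R :=
  epsilon (inhabits 0) (fun s => 0 < s /\ C_BS k s = c).

Definition d1_inv (k x : R) : R := x + sqrt (x * x + 2 * k).

Definition L2 (k c : R) : R := d1_inv k (Phi_inv c).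

Definition U1 (k c : R) : R := - 2 * Phi_inv ((1 - c) / (1 + exp k)).

(* Main.v *)
Require Import Defs.
From Stdlib Require Import Reals Lra Psatz FunctionalExtensionality ClassicalEpsilon.
From Coquelicot Require Import Coquelicot.
Open Scope R_scope.

Definition E (t : R) : R := exp (- (t * t) / 2).
Definition J (x : R) : R := RInt E 0 x.

Lemma E_pos x : 0 < E x.
Proof. apply exp_pos. Qed.

Lemma E_cont x : continuous E x.
Proof. apply (ex_derive_continuous (K:=R_AbsRing) (V:=R_NormedModule)). unfold E. auto_derive. auto. Qed.

Lemma E_exRInt a b : ex_RInt E a b.
Proof. apply (ex_RInt_continuous (V:=R_CompleteNormedModule)). intros; apply E_cont. Qed.

Lemma E_even x : E (- x) = E x.
Proof. unfold E. replace (- x * - x) with (x * x) by ring. reflexivity. Qed.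

Lemma J_derive x : is_derive J x (E x).
Proof.
  apply is_derive_RInt with 0.
  - apply filter_forall. intro b. apply (RInt_correct (V:=R_CompleteNormedModule)). apply E_exRInt.
  - apply E_cont.
Qed.

Lemma J_cont x : continuous J x.
Proof. apply (ex_derive_continuous (K:=R_AbsRing) (V:=R_NormedModule)). eexists. apply J_derive. Qed.

Lemma J_diff a b : J b - J a = RInt E a b.
Proof.
  unfold J. rewrite <- (RInt_Chasles E 0 a b) by apply E_exRInt.
  unfold plus; simpl. ring.
Qed.

Lemma J_incr a b : a < b -> J a < J b.
Proof.
  intro H. cut (0 < J b - J a). lra.
  rewrite J_diff. apply RInt_gt_0; auto.
  intros; apply E_pos. intros; apply E_cont.
Qed.

Lemma J_odd x : J (- x) = - J x.
Proof.
  unfold J.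
  assert (H := RInt_comp_lin (V:=R_CompleteNormedModule) E (-1) 0 0 x).
  replace (-1 * 0 + 0) with 0 in H by ring.
  replace (-1 * x + 0) with (- x) in H by ring.
  rewrite <- H by apply E_exRInt.
  rewrite (RInt_ext (V:=R_CompleteNormedModule) _ (fun y => opp (E y))).
  2:{ intros y _. unfold scal; simpl; unfold mult; simpl.
      replace (-1 * y + 0) with (- y) by ring. rewrite E_even. unfold opp; simpl. ring. }
  rewrite (RInt_opp (V:=R_CompleteNormedModule)) by apply E_exRInt. reflexivity.
Qed.

Lemma J0 : J 0 = 0.
Proof. unfold J. apply (RInt_point (V:=R_CompleteNormedModule)). Qed.

Lemma J_nonneg x : 0 <= x -> 0 <= J x.
Proof. intro H. unfold J. apply RInt_ge_0; auto. apply E_exRInt. intros; left; apply E_pos. Qed.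

Definition gf (x t : R) : R := exp (- (x * x) * (1 + t * t) / 2) / (1 + t * t).
Definition g (x : R) : R := RInt (gf x) 0 1.

Lemma one_tt t : 0 < 1 + t * t.
Proof. nra. Qed.

Lemma gf_der (x t : R) : is_derive (fun u => gf u t) x (- x * exp (- (x*x) * (1+t*t)/2)).
Proof.
  unfold gf. auto_derive.
  - generalize (one_tt t); lra.
  - unfold Rdiv. field. generalize (one_tt t); lra.
Qed.

Lemma gf_cont x t : continuous (gf x) t.
Proof.
  apply (ex_derive_continuous (K:=R_AbsRing) (V:=R_NormedModule)).
  unfold gf. auto_derive. generalize (one_tt t); lra.
Qed.

Lemma gf_exRInt x a b : ex_RInt (gf x) a b.
Proof. apply (ex_RInt_continuous (V:=R_CompleteNormedModule)). intros; apply gf_cont. Qed.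

Lemma Egf_cont x : continuous (fun t => E (x * t)) x.
Proof.
  apply (ex_derive_continuous (K:=R_AbsRing) (V:=R_NormedModule)).
  unfold E. auto_derive. auto.
Qed.

Lemma g_derive (x : R) : is_derive g x (- E x * J x).
Proof.
  assert (H : is_derive g x (RInt (fun t => Derive (fun u => gf u t) x) 0 1)).
  { unfold g. apply (is_derive_RInt_param gf 0 1 x).
    - apply filter_forall. intros y t _. eexists. apply gf_der.
    - intros t _.
      apply continuity_2d_pt_ext with (f := fun u v => - u * exp (- (u*u) * (1+v*v)/2)).
      { intros u v. symmetry. apply is_derive_unique. apply gf_der. }
      apply continuity_2d_pt_mult.
      + apply continuity_2d_pt_opp. apply continuity_2d_pt_id1.
      + apply continuity_1d_2d_pt_comp.
        * apply derivable_continuous_pt. apply derivable_pt_exp.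
        * unfold Rdiv. apply continuity_2d_pt_mult; [|apply continuity_2d_pt_const].
          apply continuity_2d_pt_mult.
          -- apply continuity_2d_pt_opp. apply continuity_2d_pt_mult; apply continuity_2d_pt_id1.
          -- apply continuity_2d_pt_plus; [apply continuity_2d_pt_const|].
             apply continuity_2d_pt_mult; apply continuity_2d_pt_id2.
    - apply filter_forall. intro y. apply gf_exRInt. }
  replace (- E x * J x) with (RInt (fun t => Derive (fun u => gf u t) x) 0 1); auto.
  rewrite (RInt_ext (V:=R_CompleteNormedModule) _ (fun t => scal (- x * E x) (E (x * t)))).
  2:{ intros t _. cbv beta. transitivity (- x * exp (- (x*x) * (1+t*t)/2)).
      { apply is_derive_unique. apply gf_der. }
      unfold scal; simpl; unfold mult; simpl. unfold E. rewrite Rmult_assoc, <- exp_plus.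
      f_equal. f_equal. field. }
  rewrite (RInt_scal (V:=R_CompleteNormedModule)).
  2:{ apply (ex_RInt_continuous (V:=R_CompleteNormedModule)). intros.
      apply (ex_derive_continuous (K:=R_AbsRing) (V:=R_NormedModule)).
      unfold E. auto_derive. auto. }
  unfold J.
  assert (H2 := RInt_comp_lin (V:=R_CompleteNormedModule) E x 0 0 1).
  replace (x * 0 + 0) with 0 in H2 by ring.
  replace (x * 1 + 0) with x in H2 by ring.
  rewrite <- H2 by apply E_exRInt.
  rewrite (RInt_ext (V:=R_CompleteNormedModule) (fun y => scal x (E (x * y + 0))) (fun y => scal x (E (x * y)))).
  2:{ intros. rewrite Rplus_0_r. reflexivity. }
  rewrite (RInt_scal (V:=R_CompleteNormedModule)).
  2:{ apply (ex_RInt_continuous (V:=R_CompleteNormedModule)). intros.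
      apply (ex_derive_continuous (K:=R_AbsRing) (V:=R_NormedModule)).
      unfold E. auto_derive. auto. }
  unfold scal; simpl; unfold mult; simpl. ring.
Qed.

Definition F (x : R) : R := J x * J x + 2 * g x.

Lemma F_derive (x : R) : is_derive F x 0.
Proof.
  unfold F.
  assert (H1 := is_derive_mult J J x _ _ (J_derive x) (J_derive x) ltac:(intros; apply Rmult_comm)).
  assert (H2 := is_derive_scal g x 2 _ (g_derive x)).
  assert (H3 := is_derive_plus _ _ x _ _ H1 H2).
  simpl in H3. unfold plus, mult in H3; simpl in H3.
  replace 0 with (E x * J x + J x * E x + 2 * (- E x * J x)) by ring.
  exact H3.
Qed.

Lemma g0 : g 0 = PI / 4.
Proof.
  unfold g.
  rewrite (RInt_ext (V:=R_CompleteNormedModule) _ (fun t => / (1 + t * t))).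
  2:{ intros. unfold gf. replace (- (0 * 0) * (1 + x * x) / 2) with 0 by field.
      rewrite exp_0. unfold Rdiv. rewrite Rmult_1_l. reflexivity. }
  rewrite <- atan_1.
  replace (atan 1) with (atan 1 - atan 0) by (rewrite atan_0; ring).
  apply is_RInt_unique.
  apply (is_RInt_derive (V:=R_CompleteNormedModule) atan (fun t => / (1 + t * t))).
  - intros. apply is_derive_Reals. replace (1 + x * x) with (1 + x ^ 2) by ring.
    apply derivable_pt_lim_atan.
  - intros. apply (ex_derive_continuous (K:=R_AbsRing) (V:=R_NormedModule)).
    auto_derive. generalize (one_tt x); lra.
Qed.

Lemma F_const x : F x = PI / 2.
Proof.
  assert (H : F x - F 0 = 0).
  { assert (H := is_RInt_derive (V:=R_CompleteNormedModule) F (fun _ => 0) 0 x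
        ltac:(intros; apply F_derive) ltac:(intros; apply continuous_const)).
    apply is_RInt_unique in H. rewrite (RInt_const (V:=R_CompleteNormedModule)) in H.
    unfold scal, minus, plus, opp in H; simpl in H. unfold mult in H; simpl in H.
    lra. }
  assert (F 0 = PI / 2).
  { unfold F. rewrite J0, g0. field. }
  lra.
Qed.

Lemma g_bounds x : 0 <= g x <= E x.
Proof.
  unfold g. split.
  - apply RInt_ge_0. lra. apply gf_exRInt. intros t _. unfold gf.
    left. apply Rdiv_lt_0_compat. apply exp_pos. apply one_tt.
  - replace (E x) with (RInt (fun _ => E x) 0 1).
    2:{ rewrite (RInt_const (V:=R_CompleteNormedModule)). unfold scal; simpl; unfold mult; simpl. ring. }
    apply RInt_le. lra. apply gf_exRInt. apply (ex_RInt_const (V:=R_CompleteNormedModule)).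
    intros t Ht. unfold gf, E.
    apply Rle_trans with (exp (- (x * x) * (1 + t * t) / 2)).
    + set (A := exp (- (x * x) * (1 + t * t) / 2)).
      assert (0 < A) by apply exp_pos. assert (H1 := one_tt t).
      apply Rmult_le_reg_r with (1+t*t); [lra|].
      unfold Rdiv; rewrite Rmult_assoc, Rinv_l, Rmult_1_r by lra. nra.
    + destruct (Req_dec x 0) as [->|Hx].
      * right. f_equal. field.
      * left. apply exp_increasing.
        assert (0 < x*x) by (apply Rsqr_pos_lt; auto).
        assert (0 < t*t) by nra.
        assert (0 < (x*x)*(t*t)) by (apply Rmult_lt_0_compat; auto).
        unfold Rdiv. lra.
Qed.

Definition S : R := sqrt (2 * PI) / 2.

Lemma S_pos : 0 < S.
Proof. unfold S. apply Rdiv_lt_0_compat; [|lra]. apply sqrt_lt_R0. generalize PI_RGT_0; lra. Qed.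

Lemma S_sq : S * S = PI / 2.
Proof.
  unfold S. replace (sqrt (2 * PI) / 2 * (sqrt (2 * PI) / 2)) with (sqrt (2*PI) * sqrt (2*PI) / 4) by field.
  rewrite sqrt_sqrt. field. generalize PI_RGT_0; lra.
Qed.

Lemma J_sq x : J x * J x = S * S - 2 * g x.
Proof. rewrite S_sq. generalize (F_const x). unfold F. lra. Qed.

Lemma J_le_S x : 0 <= x -> J x <= S.
Proof.
  intro H. generalize (J_nonneg x H) (J_sq x) (g_bounds x) S_pos. intros. nra.
Qed.

Lemma J_lt_S x : J x < S.
Proof.
  apply Rlt_le_trans with (J (Rabs x + 1)).
  - apply J_incr. generalize (Rle_abs x); lra.
  - apply J_le_S. generalize (Rabs_pos x); lra.
Qed.

Lemma J_gt_mS x : - S < J x.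
Proof. generalize (J_lt_S (-x)). rewrite J_odd. lra. Qed.

Lemma E_small x : 2 <= x -> E x < / (1 + x).
Proof.
  intro H. unfold E.
  apply Rle_lt_trans with (exp (- x)).
  - destruct (Req_dec x 2) as [->|].
    + right. f_equal. field.
    + left. apply exp_increasing. nra.
  - rewrite exp_Ropp. apply Rinv_lt_contravar.
    + apply Rmult_lt_0_compat; [lra| apply exp_pos].
    + apply exp_ineq1. lra.
Qed.

Lemma J_near_S eps : 0 < eps -> exists M, forall x, M <= x -> S - eps < J x.
Proof.
  intro He. exists (Rmax 2 (2 / (S * eps))). intros x Hx.
  assert (H2 : 2 <= x) by (generalize (Rmax_l 2 (2 / (S * eps))); lra).
  assert (H3 : 2 / (S * eps) <= x) by (generalize (Rmax_r 2 (2 / (S * eps))); lra).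
  generalize (J_nonneg x ltac:(lra)) (J_sq x) (g_bounds x) S_pos (E_small x H2). intros.
  assert (Hq : (S - J x) * S <= 2 * E x) by nra.
  assert (HSe : 0 < S * eps) by (apply Rmult_lt_0_compat; lra).
  assert (H4b : 2 <= x * (S * eps)).
  { apply Rmult_le_reg_r with (/ (S * eps)). apply Rinv_0_lt_compat; lra.
    rewrite Rmult_assoc, Rinv_r, Rmult_1_r by lra. exact H3. }
  assert (H5b : E x * (1 + x) < 1).
  { apply Rmult_lt_reg_r with (/ (1 + x)). apply Rinv_0_lt_compat; lra.
    rewrite Rmult_assoc, Rinv_r, Rmult_1_r, Rmult_1_l by lra. auto. }
  assert (0 < E x) by apply E_pos.
  nra.
Qed.

Lemma J_lim_minf : filterlim J (Rbar_locally m_infty) (locally (- S)).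
Proof.
  apply filterlim_locally. intro eps.
  destruct (J_near_S eps (cond_pos eps)) as [M HM].
  exists (- M). intros x Hx.
  change (Rabs (J x - - S) < eps).
  rewrite <- (Ropp_involutive x), J_odd.
  generalize (HM (- x) ltac:(lra)) (J_lt_S (- x)). intros.
  apply Rabs_def1; lra.
Qed.

Lemma Phi_eq x : Phi x = / sqrt (2 * PI) * (J x + S).
Proof.
  unfold Phi. f_equal.
  assert (HD : forall y, Derive J y = E y) by (intro; apply is_derive_unique, J_derive).
  replace (fun t => exp (- (t * t) / 2)) with (Derive J)
    by (apply functional_extensionality; intro; rewrite HD; reflexivity).
  apply is_RInt_gen_unique.
  replace (J x + S) with (J x - - S) by ring.
  apply is_RInt_gen_Derive.
  - exists (fun _ => True) (fun _ => True). exists 0; auto. unfold at_point; auto.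
    intros; eexists; apply J_derive.
  - exists (fun _ => True) (fun _ => True). exists 0; auto. unfold at_point; auto.
    intros. rewrite (functional_extensionality _ _ HD). apply E_cont.
  - apply J_lim_minf.
  - intros P HP. exact (locally_singleton _ _ HP).
Qed.

Lemma Phi_eq2 x : Phi x = / 2 + J x / sqrt (2 * PI).
Proof.
  rewrite Phi_eq. unfold S. assert (0 < sqrt (2*PI)) by (apply sqrt_lt_R0; generalize PI_RGT_0; lra).
  field. lra.
Qed.

Lemma sqrt2PI : sqrt (2 * PI) = 2 * S.
Proof. unfold S. field. Qed.

Lemma Phi_eq3 x : Phi x = / 2 + J x / (2 * S).
Proof. rewrite Phi_eq2, sqrt2PI. reflexivity. Qed.

Lemma Phi_incr a b : a < b -> Phi a < Phi b.
Proof.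
  intro H. rewrite !Phi_eq3. generalize (J_incr a b H) S_pos. intros.
  apply Rplus_lt_compat_l. apply Rmult_lt_compat_r. apply Rinv_0_lt_compat; lra. auto.
Qed.

Lemma Phi_le a b : a <= b -> Phi a <= Phi b.
Proof. intros [H|H]. left; apply Phi_incr; auto. right; subst; auto. Qed.

Lemma Phi_lt_inv a b : Phi a < Phi b -> a < b.
Proof.
  intro H. destruct (Rlt_le_dec a b); auto. apply Phi_le in r. lra.
Qed.

Lemma Phi_inj a b : Phi a = Phi b -> a = b.
Proof.
  intro H. destruct (Rtotal_order a b) as [h|[h|h]]; auto;
  apply Phi_incr in h; lra.
Qed.

Lemma Phi_bounds x : 0 < Phi x < 1.
Proof.
  rewrite Phi_eq3. generalize (J_lt_S x) (J_gt_mS x) S_pos. intros.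
  assert (-S/(2*S) < J x / (2*S) < S / (2*S)).
  { split; apply Rmult_lt_compat_r; try (apply Rinv_0_lt_compat; lra); lra. }
  replace (S / (2*S)) with (/2) in H2 by (field; lra).
  replace (-S / (2*S)) with (-/2) in H2 by (field; lra).
  lra.
Qed.

Lemma Phi_0 : Phi 0 = / 2.
Proof. rewrite Phi_eq3, J0. unfold Rdiv. ring. Qed.

Lemma Phi_sym x : Phi (- x) = 1 - Phi x.
Proof. rewrite !Phi_eq3, J_odd. field. generalize S_pos; lra. Qed.

Lemma Phi_cont x : continuous Phi x.
Proof.
  apply (continuous_ext (fun y => plus (/2) (mult (J y) (/ (2 * S))))).
  { intro y. rewrite Phi_eq3. reflexivity. }
  apply (continuous_plus (K:=R_AbsRing) (V:=R_NormedModule)).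
  apply continuous_const.
  apply (continuous_mult (K:=R_AbsRing)). apply J_cont. apply continuous_const.
Qed.

Lemma Phi_continuity : continuity Phi.
Proof. intro x. apply continuity_pt_filterlim. apply Phi_cont. Qed.

Lemma Phi_big c : c < 1 -> exists x, c <= Phi x.
Proof.
  intro Hc. destruct (J_near_S (2 * S * (1 - c))) as [M HM].
  { generalize S_pos; intros. apply Rmult_lt_0_compat; lra. }
  exists M. generalize (HM M (Rle_refl M)). rewrite Phi_eq3. intro H.
  generalize S_pos; intro.
  assert (c - /2 <= J M / (2 * S)); [|lra].
  apply Rmult_le_reg_r with (2 * S). lra.
  unfold Rdiv. rewrite Rmult_assoc, Rinv_l, Rmult_1_r by lra. nra.
Qed.

Lemma Phi_surj c : 0 < c < 1 -> exists x, Phi x = c.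
Proof.
  intro Hc.
  destruct (Phi_big c ltac:(lra)) as [b Hb].
  destruct (Phi_big (1 - c) ltac:(lra)) as [a Ha].
  assert (Ha' : Phi (- a) <= c) by (rewrite Phi_sym; lra).
  destruct (IVT_gen Phi (- a) b c Phi_continuity) as [x [_ Hx]].
  { split. apply Rle_trans with (Phi (-a)); auto. apply Rmin_l.
    apply Rle_trans with (Phi b); auto. apply Rmax_r. }
  exists x; auto.
Qed.

Lemma Phi_inv_spec c : 0 < c < 1 -> Phi (Phi_inv c) = c.
Proof.
  intro H. unfold Phi_inv. apply (epsilon_spec (inhabits 0) (fun x => Phi x = c)).
  apply Phi_surj; auto.
Qed.

Lemma Phi_inv_unique c x : Phi x = c -> Phi_inv c = x.
Proof.
  intro H. apply Phi_inj. rewrite H. apply Phi_inv_spec. rewrite <- H. apply Phi_bounds.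
Qed.

Lemma Phi_inv_sym c : 0 < c < 1 -> Phi_inv (1 - c) = - Phi_inv c.
Proof.
  intro H. apply Phi_inv_unique. rewrite Phi_sym, Phi_inv_spec; auto.
Qed.

Lemma sq_facts k x : 0 < k -> 0 <= sqrt (x*x+2*k) /\ sqrt (x*x+2*k) * sqrt (x*x+2*k) = x*x+2*k.
Proof. intro. split. apply sqrt_pos. apply sqrt_sqrt. nra. Qed.

Lemma d1_inv_pos k x : 0 < k -> 0 < d1_inv k x.
Proof.
  intro Hk. unfold d1_inv. destruct (sq_facts k x Hk) as [H1 H2].
  set (s := sqrt (x*x+2*k)) in *. nra.
Qed.

Lemma d1_d1_inv k x : 0 < k -> Defs.d1 k (d1_inv k x) = x.
Proof.
  intro Hk. generalize (d1_inv_pos k x Hk). unfold Defs.d1, d1_inv. intro Hp.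
  destruct (sq_facts k x Hk) as [H1 H2].
  set (s := sqrt (x*x+2*k)) in *.
  replace k with ((s*s - x*x)/2) by lra. field. lra.
Qed.

Lemma d1_mono k a b : 0 < k -> 0 < a -> a < b -> Defs.d1 k a < Defs.d1 k b.
Proof.
  intros Hk Ha Hab. unfold Defs.d1.
  assert (k / b < k / a).
  { unfold Rdiv. apply Rmult_lt_compat_l; auto. apply Rinv_lt_contravar; nra. }
  lra.
Qed.

Lemma d1_le k a b : 0 < k -> 0 < a -> a <= b -> Defs.d1 k a <= Defs.d1 k b.
Proof. intros Hk Ha [H|H]. left; apply d1_mono; auto. subst; right; auto. Qed.

Lemma d2_le k s : 0 < k -> 0 < s -> Defs.d2 k s <= - s / 2.
Proof.
  intros. unfold Defs.d2. assert (0 < k / s) by (apply Rdiv_lt_0_compat; auto). lra.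
Qed.

Lemma d1_cont k s : 0 < s -> continuous (Defs.d1 k) s.
Proof.
  intro. apply (ex_derive_continuous (K:=R_AbsRing) (V:=R_NormedModule)).
  unfold Defs.d1. auto_derive. lra.
Qed.

Lemma d2_cont k s : 0 < s -> continuous (Defs.d2 k) s.
Proof.
  intro. apply (ex_derive_continuous (K:=R_AbsRing) (V:=R_NormedModule)).
  unfold Defs.d2. auto_derive. lra.
Qed.

Lemma C_BS_cont k s : 0 < s -> continuity_pt (C_BS k) s.
Proof.
  intro Hs. apply continuity_pt_filterlim.
  apply (continuous_ext (fun y => minus (Phi (Defs.d1 k y)) (mult (exp k) (Phi (Defs.d2 k y))))).
  { intro y. unfold C_BS. reflexivity. }
  apply (continuous_minus (K:=R_AbsRing) (V:=R_NormedModule)).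
  - apply (continuous_comp (Defs.d1 k) Phi). apply d1_cont; auto. apply Phi_cont.
  - apply (continuous_mult (K:=R_AbsRing)). apply continuous_const.
    apply (continuous_comp (Defs.d2 k) Phi). apply d2_cont; auto. apply Phi_cont.
Qed.

Lemma vol_exists k c : 0 < k -> 0 < c < 1 -> exists s, 0 < s /\ C_BS k s = c.
Proof.
  intros Hk Hc.
  assert (Hek : 0 < exp k) by apply exp_pos.
  set (x0 := Phi_inv (c / 2)).
  assert (Hx0 : Phi x0 = c / 2) by (apply Phi_inv_spec; lra).
  set (s1 := d1_inv k x0).
  assert (Hs1 : 0 < s1) by (apply d1_inv_pos; auto).
  assert (C1 : C_BS k s1 < c).
  { unfold C_BS. unfold s1. rewrite d1_d1_inv, Hx0 by auto.
    generalize (Phi_bounds (Defs.d2 k (d1_inv k x0))). intros. nra. }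
  set (y1 := Phi_inv ((1 + c) / 2)).
  assert (Hy1 : Phi y1 = (1 + c) / 2) by (apply Phi_inv_spec; lra).
  set (q := (1 - c) / (2 * (1 + exp k))).
  assert (Hq : 0 < q < 1).
  { unfold q. split. apply Rdiv_lt_0_compat; lra.
    apply Rmult_lt_reg_r with (2 * (1 + exp k)). lra.
    unfold Rdiv. rewrite Rmult_assoc, Rinv_l by lra. lra. }
  set (y2 := Phi_inv q).
  assert (Hy2 : Phi y2 = q) by (apply Phi_inv_spec; lra).
  set (s2 := Rmax (Rmax (d1_inv k y1) (-2 * y2)) (s1 + 1)).
  assert (Hs2a : d1_inv k y1 <= s2) by (unfold s2; eapply Rle_trans; [apply Rmax_l|apply Rmax_l]).
  assert (Hs2b : -2 * y2 <= s2) by (unfold s2; eapply Rle_trans; [apply Rmax_r|apply Rmax_l]).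
  assert (Hs2c : s1 + 1 <= s2) by (unfold s2; apply Rmax_r).
  assert (C2 : c < C_BS k s2).
  { unfold C_BS.
    assert (A1 : (1 + c) / 2 <= Phi (Defs.d1 k s2)).
    { rewrite <- Hy1. apply Phi_le. rewrite <- (d1_d1_inv k y1) at 1 by auto.
      apply d1_le; auto. apply d1_inv_pos; auto. }
    assert (A2 : Phi (Defs.d2 k s2) <= q).
    { rewrite <- Hy2. apply Phi_le. generalize (d2_le k s2 Hk ltac:(lra)). lra. }
    assert (A3 : exp k * q < (1 - c) / 2).
    { unfold q. apply Rmult_lt_reg_r with (2 * (1 + exp k)). lra.
      unfold Rdiv. rewrite Rmult_assoc, (Rmult_assoc (1 - c)), Rinv_l by lra. nra. }
    nra. }
  destruct (Ranalysis5.IVT_interv (fun s => C_BS k s - c) s1 s2) as [z [Hz1 Hz2]].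
  - intros a Ha. apply continuity_pt_minus. apply C_BS_cont. lra. apply continuity_pt_const. intros u v; auto.
  - lra.
  - lra.
  - lra.
  - exists z. split; lra.
Qed.

Lemma vol_spec k c : 0 < k -> 0 < c < 1 -> 0 < implied_vol k c /\ C_BS k (implied_vol k c) = c.
Proof.
  intros. unfold implied_vol. apply (epsilon_spec (inhabits 0) (fun s => 0 < s /\ C_BS k s = c)).
  apply vol_exists; auto.
Qed.

Lemma L2_lt_vol k c : 0 < k -> 0 < c < 1 -> L2 k c < implied_vol k c.
Proof.
  intros Hk Hc. destruct (vol_spec k c Hk Hc) as [Hs Hv].
  set (s := implied_vol k c) in *.
  unfold L2. set (x := Phi_inv c).
  assert (Hx : Phi x = c) by (apply Phi_inv_spec; auto).
  assert (Hlt : x < Defs.d1 k s).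
  { apply Phi_lt_inv. rewrite Hx. rewrite <- Hv at 1. unfold C_BS.
    generalize (Phi_bounds (Defs.d2 k s)) (exp_pos k). intros. nra. }
  destruct (Rlt_le_dec (d1_inv k x) s) as [h|h]; auto.
  pose proof (d1_le k s (d1_inv k x) Hk Hs h) as h2. rewrite d1_d1_inv in h2; auto. lra.
Qed.

Lemma L2_prod k c : 0 < k -> 0 < c < 1 -> L2 k c * L2 k (1 - c) = 2 * k.
Proof.
  intros Hk Hc. unfold L2. rewrite Phi_inv_sym by auto.
  set (x := Phi_inv c). unfold d1_inv.
  replace (- x * - x) with (x * x) by ring.
  destruct (sq_facts k x Hk) as [H1 H2].
  set (s := sqrt (x*x+2*k)) in *. nra.
Qed.

Lemma part1 k : 0 < k ->
  (forall U : R -> R,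
     (forall c, 0 < c < 1 -> 0 < U c) ->
     (forall c, 0 < c < 1 -> implied_vol k c <= U c) ->
     forall c, 0 < c < 1 ->
       2 * k / U (1 - c) <= L2 k c /\ L2 k c <= implied_vol k c).
Proof.
  intros Hk U HU Hv c Hc. split.
  - assert (Hc' : 0 < 1 - c < 1) by lra.
    generalize (HU _ Hc') (Hv _ Hc') (L2_lt_vol k _ Hk Hc') (L2_prod k c Hk Hc). intros.
    assert (0 < L2 k c) by (unfold L2; apply d1_inv_pos; auto).
    assert (L2 k c * L2 k (1-c) <= L2 k c * U (1-c)) by (apply Rmult_le_compat_l; lra).
    apply Rmult_le_reg_r with (U (1 - c)); auto.
    unfold Rdiv. rewrite Rmult_assoc, Rinv_l by lra. lra.
  - left. apply L2_lt_vol; auto.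
Qed.

Theorem mainTheorem10 (k : R) (hk : 0 < k) :
  (forall U : R -> R,
     (forall c, 0 < c < 1 -> 0 < U c) ->
     (forall c, 0 < c < 1 -> implied_vol k c <= U c) ->
     forall c, 0 < c < 1 ->
       2 * k / U (1 - c) <= L2 k c /\ L2 k c <= implied_vol k c)
  /\
  ((forall c, 0 < c < 1 -> implied_vol k c <= U1 k c) ->
     forall c, 0 < c < 1 ->
       - k / Phi_inv (c / (1 + exp k)) <= L2 k c).
Proof.
  split. apply part1; auto.
  intros HU1 c Hc.
  assert (Hek : 1 < exp k) by (rewrite <- exp_0; apply exp_increasing; lra).
  assert (Hneg : forall p, 0 < p < / 2 -> Phi_inv p < 0).
  { intros p Hp. apply Phi_lt_inv. rewrite Phi_0. rewrite Phi_inv_spec. lra. lra. }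
  assert (Hsmall : forall c', 0 < c' < 1 -> 0 < c' / (1 + exp k) < / 2).
  { intros c' Hc'. split. apply Rdiv_lt_0_compat; lra.
    apply Rlt_le_trans with (1 / (1 + exp k)).
    apply Rmult_lt_compat_r. apply Rinv_0_lt_compat; lra. lra.
    unfold Rdiv. rewrite Rmult_1_l. apply Rinv_le_contravar; lra. }
  assert (HposU : forall c', 0 < c' < 1 -> 0 < U1 k c').
  { intros c' Hc'. unfold U1. assert (0 < 1 - c' < 1) by lra.
    generalize (Hneg _ (Hsmall _ H)). lra. }
  destruct (part1 k hk (U1 k) HposU HU1 c Hc) as [H _].
  replace (- k / Phi_inv (c / (1 + exp k))) with (2 * k / U1 k (1 - c)); auto.
  unfold U1. replace (1 - (1 - c)) with c by ring.
  generalize (Hneg _ (Hsmall _ Hc)). intro. field. lra.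
Qed.
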